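(* Let $\mathcal{H}=([n],E=\{e_1,\dots,e_m\})$ be a 3-uniform hypergraph with $n$ vertices and $m=cn$ hyperedges. Suppose $\mathcal{H}$ is $(\epsilon,100c)$-degree bounded and $(\beta,\gamma)$-asymmetric, where $\gamma\ge 200\epsilon$. Let $\mathcal{C}=\{C_1,\dots,C_m\}$ be an arbitrary 3XOR instance with $n$ variables and $m$ constraints based on $\mathcal{H}$ (i.e. $e_i$ is the set of indices of the three variables used by $C_i$). Set $\delta=\min\{\frac{1}{200},\frac{\gamma}{48},\frac{\epsilon}{95c}\}$. If $\mathrm{GI}(G_{\mathcal{C}},G_{\mathcal{C}^0})\ge 1-\delta$, then $\mathrm{val}(\mathcal{C})\ge 0.9-100(\epsilon+\beta)$.
   Context: A hypergraph is $(\epsilon,D)$-degree bounded if every set of an $\epsilon$ fraction of its vertices has average degree at most $D$ (degree = number of hyperedges containing the vertex). For a hypergraph $\mathcal{H}=(V,E)$ and a permutation $\pi$ of $V$, $\mathrm{AUT}(\mathcal{H};\pi)=|\{e\in E:\pi(e)\in E\}|/|E|$; $\mathcal{H}$ is $(\beta,\gamma)$-asymmetric if every permutation with at most a $(1-\beta)$ fraction of the vertices as fixed points has $\mathrm{AUT}(\mathcal{H};\pi)<1-\gamma$. 3XOR instance: equations $x_{j_1}+x_{j_2}+x_{j_3}=b$ over $\mathbb{Z}_2$; $\mathrm{val}(\mathcal{C})$ is the maximum fraction of equations satisfiable by an assignment; $\mathcal{C}^0$ sets all right-hand sides to $0$. Graph $G_{\mathcal{C}}$: for each variable $x$, two variable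 vertices $x\mapsto0,x\mapsto1$ joined by an edge; for each equation $C$ on $x_1,x_2,x_3$, four constraint vertices, one per satisfying assignment $(x_1\mapsto a_1,x_2\mapsto a_2,x_3\mapsto a_3)$, forming a clique, each adjacent to the variable vertices $x_i\mapsto a_i$; variable vertices shared, constraint vertices not. $\mathrm{GI}(G,H)=\max_\pi\frac{|\{e\in E(G):\pi(e)\in E(H)\}|}{\max\{|E(G)|,|E(H)|\}}$ over bijections $\pi$. *)

(* Defs.v *)
From HB Require Import structures.
From mathcomp Require Import all_boot all_order all_algebra all_fingroup.
Set Implicit Arguments. Unset Strict Implicit. Unset Printing Implicit Defensive.
Import Order.TTheory GRing.Theory Num.Theory.
Local Open Scope ring_scope.

Section Defs.
Variable R : realFieldType.

Definition hedges (n m : nat) (he : 'I_m -> {set 'I_n}) : {set {set 'I_n}} :=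
  [set he i | i : 'I_m].

Definition hdeg (n m : nat) (he : 'I_m -> {set 'I_n}) (v : 'I_n) : nat :=
  #|[set e in hedges he | v \in e]|.

Definition degree_bounded (n m : nat) (he : 'I_m -> {set 'I_n}) (eps D : R) : Prop :=
  forall S : {set 'I_n}, (#|S|%:R <= eps * n%:R) ->
    \sum_(v in S) ((hdeg he v)%:R : R) <= D * (eps * n%:R).

Definition AUT (n : nat) (E : {set {set 'I_n}}) (pi : {perm 'I_n}) : R :=
  (#|[set e in E | (pi @: e) \in E]|)%:R / (#|E|)%:R.

Definition asymmetric (n m : nat) (he : 'I_m -> {set 'I_n}) (beta gamma : R) : Prop :=
  forall pi : {perm 'I_n},
    (#|[set x | pi x == x]|)%:R <= (1 - beta) * n%:R ->
    AUT (hedges he) pi < 1 - gamma.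

Definition sat3 (n : nat) (vs : 'I_3 -> 'I_n) (b : bool) (x : {ffun 'I_n -> bool}) : bool :=
  (\big[addb/false]_(k < 3) x (vs k)) == b.

Definition val3 (n m : nat) (vars : 'I_m -> 'I_3 -> 'I_n) (rhs : 'I_m -> bool) : R :=
  (\max_(x : {ffun 'I_n -> bool}) #|[set i : 'I_m | sat3 (vars i) (rhs i) x]|)%:R / m%:R.

(* ---------- the graph G_C ----------
   variable vertices (x, a) ~ "x |-> a";
   constraint vertices (i, (a1, a2)) ~ the satisfying assignment
   (x1 |-> a1, x2 |-> a2, x3 |-> a1 + a2 + b_i) of constraint i *)
Definition gvert (n m : nat) : finType := (('I_n * bool) + ('I_m * (bool * bool)))%type.

Definition asg (b : bool) (p : bool * bool) (k : 'I_3) : bool :=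
  match val k with
  | 0%N => p.1
  | 1%N => p.2
  | _ => addb (addb p.1 p.2) b
  end.

Definition gadj (n m : nat) (vars : 'I_m -> 'I_3 -> 'I_n) (rhs : 'I_m -> bool)
    (u v : gvert n m) : bool :=
  match u, v with
  | inl (x, a), inl (y, a') => (x == y) && (a != a')
  | inr (i, p), inr (j, q) => (i == j) && (p != q)
  | inr (i, p), inl (x, a) => [exists k : 'I_3, (vars i k == x) && (asg (rhs i) p k == a)]
  | inl (x, a), inr (i, p) => [exists k : 'I_3, (vars i k == x) && (asg (rhs i) p k == a)]
  end.

Definition gedges (n m : nat) (vars : 'I_m -> 'I_3 -> 'I_n) (rhs : 'I_m -> bool)
    : {set {set gvert n m}} :=
  [set s : {set gvert n m} | (#|s| == 2%N) &&
     [forall u in s, forall v in s, (u != v) ==> gadj vars rhs u v]].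

Definition GI (V : finType) (EG EH : {set {set V}}) : R :=
  (\max_(pi : {perm V}) #|[set e in EG | (pi @: e) \in EH]|)%:R / (maxn #|EG| #|EH|)%:R.

End Defs.

(* Main.v *)
Require Import Defs.
From HB Require Import structures.
From mathcomp Require Import all_boot all_order all_algebra all_fingroup.
From mathcomp Require Import zify ring lra.
Import Order.TTheory GRing.Theory Num.Theory.
Set Implicit Arguments. Unset Strict Implicit. Unset Printing Implicit Defensive.

Section G.
Variables (n m : nat) (vars : 'I_m -> 'I_3 -> 'I_n) (rhs : 'I_m -> bool).
Local Notation adj := (gadj vars rhs).

Lemma gadj_sym u v : adj u v = adj v u.
Proof.
case: u => [[x a]|[i p]]; case: v => [[y b]|[j q]] //=.
  by rewrite eq_sym (eq_sym b).
by rewrite eq_sym (eq_sym q).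
Qed.

Lemma gadj_irr u : adj u u = false.
Proof.
by case: u => [[x a]|[i p]]; rewrite /= !eqxx.
Qed.

Lemma edgeE u v : ([set u; v] \in gedges vars rhs) = adj u v.
Proof.
rewrite inE cards2; case: (eqVneq u v) => [->|neq]; first by rewrite gadj_irr.
rewrite /=; apply/forall_inP/idP => [H|H w].
  have /forall_inP /(_ v) := H u (set21 u v).
  by rewrite set22 neq => /(_ isT).
rewrite !inE => /orP[] /eqP ->; apply/forall_inP => z; rewrite !inE.
  by case/orP=>/eqP->; rewrite ?eqxx // H implybT.
by case/orP=>/eqP->; rewrite ?eqxx // gadj_sym H implybT.
Qed.

Lemma imset2E (f : gvert n m -> gvert n m) u v : f @: [set u; v] = [set f u; f v].
Proof. by rewrite imsetU1 imset_set1. Qed.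


Hypothesis vinj : forall j, injective (vars j).

Lemma inl_adj x a v : adj (inl (x,a)) v -> v = inl (x, ~~a) \/
  exists j r k, v = inr (j,r) /\ vars j k = x /\ asg (rhs j) r k = a.
Proof.
case: v => [[y b]|[j r]] /=.
  by case/andP=> /eqP <-; case: a; case: b => //= _; left.
case/existsP=> k /andP[/eqP h1 /eqP h2]; right; by exists j, r, k.
Qed.

Lemma asg3 rb k r1 r2 r3 al : r1 != r2 -> r1 != r3 -> r2 != r3 ->
  asg rb r1 k = al -> asg rb r2 k = al -> asg rb r3 k = al -> False.
Proof.
rewrite /asg; case: k => [[|[|[|//]]] _] /=;
case: r1 r2 r3 => [[] []] [[] []] [[] []]; case: rb; case: al => //.
Qed.

Lemma L3 x al b c d :
  (exists j r k, b = inr (j,r) /\ vars j k = x /\ asg (rhs j) r k = al) ->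
  (exists j r k, c = inr (j,r) /\ vars j k = x /\ asg (rhs j) r k = al) ->
  (d = inl (x, ~~al) \/ exists j r k, d = inr (j,r) /\ vars j k = x /\ asg (rhs j) r k = al) ->
  adj b c -> adj b d -> adj c d -> False.
Proof.
move=> [j [r [k [-> [h1 h2]]]]] [j' [r' [k' [-> [h1' h2']]]]] Hd /= /andP[/eqP ejj' rr'].
subst j'. have kk : k' = k := vinj (etrans h1' (esym h1)). subst k'.
case: Hd => [->|[j'' [r'' [k'' [-> [h1'' h2'']]]]]] /=.
  case/existsP => k2 /andP[/eqP e1 /eqP e2] _.
  have kk : k2 = k := vinj (etrans e1 (esym h1)).
  by subst k2; move: e2; rewrite h2; case: al {h2 h2'}.
move=> /andP[/eqP ej r1] /andP[_ r2]. subst j''.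
have kk : k'' = k := vinj (etrans h1'' (esym h1)). subst k''.
exact: (asg3 rr' r1 r2 h2 h2' h2'').
Qed.

Lemma K4 a b c d : adj a b -> adj a c -> adj a d -> adj b c -> adj b d -> adj c d ->
  exists jr, a = inr jr.
Proof.
case: a => [[x al]|jr]; last by exists jr.
move=> ab ac ad bc bd cd; exfalso.
have Hb := inl_adj ab; have Hc := inl_adj ac; have Hd := inl_adj ad.
case: Hb => [eb|Hb'].
  case: Hc => [ec|Hc'].
    by move: bc; rewrite eb ec gadj_irr.
  case: Hd => [ed|Hd'].
    by move: bd; rewrite eb ed gadj_irr.
  have cb : adj c b by rewrite gadj_sym.
  have db : adj d b by rewrite gadj_sym.
  exact: (L3 Hc' Hd' (or_introl eb) cd cb db).
case: Hc => [ec|Hc'].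
  case: Hd => [ed|Hd'].
    by move: cd; rewrite ec ed gadj_irr.
  have dc : adj d c by rewrite gadj_sym.
  exact: (L3 Hb' Hd' (or_introl ec) bd bc dc).
exact: (L3 Hb' Hc' Hd bc bd cd).
Qed.

End G.

Lemma exists_p rb (k : 'I_3) a : exists p, asg rb p k = a.
Proof.
case: k => [[|[|[|//]]] Hk]; [exists (a,false)|exists (false,a)|exists (a (+) rb, false)];
by rewrite /asg /=; case: a; case: rb.
Qed.

Lemma triple (g : nat -> bool) x y z : x < 3 -> y < 3 -> z < 3 ->
  x != y -> x != z -> y != z -> g x (+) g y (+) g z = g 0 (+) g 1 (+) g 2.
Proof.
case: x => [|[|[|//]]]; case: y => [|[|[|//]]]; case: z => [|[|[|//]]] //= *;
by case: (g 0); case: (g 1); case: (g 2).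
Qed.

Lemma core (rb b00 b01 b10 b11 b20 b21 : bool) (K00 K01 K10 K11 K20 K21 : nat) :
  b00 (+) b10 (+) (if rb then b21 else b20) = false ->
  b01 (+) b11 (+) (if rb then b21 else b20) = false ->
  b00 (+) b11 (+) (if rb then b20 else b21) = false ->
  K00 != K10 -> K00 != (if rb then K21 else K20) -> K10 != (if rb then K21 else K20) ->
  K01 != K11 -> K01 != (if rb then K21 else K20) -> K11 != (if rb then K21 else K20) ->
  K00 != K11 -> K00 < 3 -> K01 < 3 -> K10 < 3 -> K11 < 3 -> K20 < 3 -> K21 < 3 ->
  (K00 != K01) || (b00 != b01) -> b00 (+) b10 (+) b20 = rb.
Proof.
case: rb; case: b00; case: b01; case: b10; case: b11; case: b20; case: b21 => //= *; lia.
Qed.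

Definition o0 : 'I_3 := @Ordinal 3 0 isT.
Definition o1 : 'I_3 := @Ordinal 3 1 isT.
Definition o2 : 'I_3 := @Ordinal 3 2 isT.

Lemma big3 (F : 'I_3 -> bool) : \big[addb/false]_(k < 3) F k = F o0 (+) F o1 (+) F o2.
Proof.
rewrite !big_ord_recl big_ord0 addbF addbA.
by congr (F _ (+) F _ (+) F _); apply: val_inj.
Qed.

Section L.
Variables (n m : nat) (vars : 'I_m -> 'I_3 -> 'I_n) (rhs : 'I_m -> bool).
Hypothesis vinj : forall j, injective (vars j).
Variable pi : {perm gvert n m}.
Local Notation adj0 := (gadj vars (fun _ => false)).

Definition shift : {ffun 'I_n -> bool} :=
  [ffun x => if pi (inl (x,false)) is inl (_, b) then b else false].

Lemma local i :
  (forall p q, p != q -> adj0 (pi (inr (i,p))) (pi (inr (i,q)))) ->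
  (forall p k, adj0 (pi (inr (i,p))) (pi (inl (vars i k, asg (rhs i) p k)))) ->
  sat3 (vars i) (rhs i) shift.
Proof.
move=> Hc Hl.
pose v p := pi (inr (i,p)).
have Hinr : forall p, exists jr, v p = inr jr.
  have K := K4 (vars := vars) (rhs := fun _ => false) vinj.
  case=> [[] []].
  - by apply: (K _ (v (true,false)) (v (false,true)) (v (false,false))); apply: Hc.
  - by apply: (K _ (v (true,true)) (v (false,true)) (v (false,false))); apply: Hc.
  - by apply: (K _ (v (true,true)) (v (true,false)) (v (false,false))); apply: Hc.
  - by apply: (K _ (v (true,true)) (v (true,false)) (v (false,true))); apply: Hc.
pose J p := if v p is inr (j,_) then j else i.
pose Rr p := if v p is inr (_,r) then r else p.
have vE : forall p, v p = inr (J p, Rr p).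
  by move=> p; rewrite /J /Rr; case: (Hinr p) => -[j r] ->.
have Jc : forall p, J p = J (false,false).
  move=> p; case: (eqVneq p (false,false)) => [->//|ne].
  by have := Hc _ _ ne; rewrite -/(v p) -/(v _) !vE /= => /andP[/eqP].
set j := J (false,false).
have vE' : forall p, v p = inr (j, Rr p) by move=> p; rewrite vE Jc.
have Rinj : injective Rr.
  move=> p q e; have : v p = v q by rewrite !vE' e.
  by move/perm_inj => -[].
have Rsurj : forall r, exists q, Rr q = r.
  by move=> r; have /codomP [q ->] := injF_onto Rinj r; exists q.
have StepB : forall k a, exists K B, pi (inl (vars i k, a)) = inl (vars j K, B) /\
    forall p, asg (rhs i) p k = a -> asg false (Rr p) K = B.
  move=> k a; have [p0 hp0] := exists_p (rhs i) k a.
  have := Hl p0 k; rewrite hp0 -/(v p0) vE'.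
  case E: (pi (inl (vars i k, a))) => [[y b]|[j' r']] /=.
    case/existsP => K /andP[/eqP hy /eqP hb]; exists K, b; split; first by rewrite hy.
    move=> p hp; have := Hl p k; rewrite hp -/(v p) vE' E /=.
    case/existsP => K' /andP[/eqP hy' /eqP hb'].
    by have KK : K' = K := vinj (etrans hy' (esym hy)); rewrite -KK.
  move=> /andP[/eqP ej _]; have [q hq] := Rsurj r'.
  have : pi (inl (vars i k, a)) = pi (inr (i,q)) by rewrite E -/(v q) vE' hq ej.
  by move/perm_inj.
have Kdist : forall k1 a1 K1 B1 k2 a2 K2 B2 p,
  pi (inl (vars i k1, a1)) = inl (vars j K1, B1) ->
  (forall p, asg (rhs i) p k1 = a1 -> asg false (Rr p) K1 = B1) ->
  pi (inl (vars i k2, a2)) = inl (vars j K2, B2) ->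
  (forall p, asg (rhs i) p k2 = a2 -> asg false (Rr p) K2 = B2) ->
  asg (rhs i) p k1 = a1 -> asg (rhs i) p k2 = a2 -> k1 != k2 -> val K1 != val K2.
  move=> k1 a1 K1 B1 k2 a2 K2 B2 p E1 P1 E2 P2 h1 h2 kne.
  apply/negP => /eqP /val_inj eK; subst K2.
  have eB : B1 = B2 by rewrite -(P1 p h1) -(P2 p h2).
  subst B2.
  have : pi (inl (vars i k1, a1)) = pi (inl (vars i k2, a2)) by rewrite E1 E2.
  by move/perm_inj => -[/vinj e _]; rewrite e eqxx in kne.
have Ksum : forall p a0 a1 a2 K0 B0 K1 B1 K2 B2,
  pi (inl (vars i o0, a0)) = inl (vars j K0, B0) ->
  (forall p, asg (rhs i) p o0 = a0 -> asg false (Rr p) K0 = B0) ->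
  pi (inl (vars i o1, a1)) = inl (vars j K1, B1) ->
  (forall p, asg (rhs i) p o1 = a1 -> asg false (Rr p) K1 = B1) ->
  pi (inl (vars i o2, a2)) = inl (vars j K2, B2) ->
  (forall p, asg (rhs i) p o2 = a2 -> asg false (Rr p) K2 = B2) ->
  asg (rhs i) p o0 = a0 -> asg (rhs i) p o1 = a1 -> asg (rhs i) p o2 = a2 ->
  B0 (+) B1 (+) B2 = false /\ [&& val K0 != val K1, val K0 != val K2 & val K1 != val K2].
  move=> p a0 a1 a2 K0 B0 K1 B1 K2 B2 E0 P0 E1 P1 E2 P2 h0 h1 h2.
  have d01 := Kdist _ _ _ _ _ _ _ _ _ E0 P0 E1 P1 h0 h1 isT.
  have d02 := Kdist _ _ _ _ _ _ _ _ _ E0 P0 E2 P2 h0 h2 isT.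
  have d12 := Kdist _ _ _ _ _ _ _ _ _ E1 P1 E2 P2 h1 h2 isT.
  split; last by rewrite d01 d02 d12.
  rewrite -(P0 p h0) -(P1 p h1) -(P2 p h2).
  pose g t := match t with 0 => (Rr p).1 | 1 => (Rr p).2 | _ => (Rr p).1 (+) (Rr p).2 (+) false end.
  change (g (val K0) (+) g (val K1) (+) g (val K2) = false).
  rewrite (triple g (ltn_ord K0) (ltn_ord K1) (ltn_ord K2) d01 d02 d12) /g.
  by case: (Rr p) => [] [] [].
have [K00 [B00 [E00 P00]]] := StepB o0 false.
have [K01 [B01 [E01 P01]]] := StepB o0 true.
have [K10 [B10 [E10 P10]]] := StepB o1 false.
have [K11 [B11 [E11 P11]]] := StepB o1 true.
have [K20 [B20 [E20 P20]]] := StepB o2 false.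
have [K21 [B21 [E21 P21]]] := StepB o2 true.
have [S1 D1] : B00 (+) B10 (+) (if rhs i then B21 else B20) = false /\
   [&& val K00 != val K10, val K00 != val (if rhs i then K21 else K20)
     & val K10 != val (if rhs i then K21 else K20)].
  case Er: (rhs i).
    by apply: (Ksum (false,false) _ _ _ _ _ _ _ _ _ E00 P00 E10 P10 E21 P21); rewrite /asg /= ?Er.
  by apply: (Ksum (false,false) _ _ _ _ _ _ _ _ _ E00 P00 E10 P10 E20 P20); rewrite /asg /= ?Er.
have [S2 D2] : B01 (+) B11 (+) (if rhs i then B21 else B20) = false /\
   [&& val K01 != val K11, val K01 != val (if rhs i then K21 else K20)
     & val K11 != val (if rhs i then K21 else K20)].
  case Er: (rhs i).
    by apply: (Ksum (true,true) _ _ _ _ _ _ _ _ _ E01 P01 E11 P11 E21 P21); rewrite /asg /= ?Er.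
  by apply: (Ksum (true,true) _ _ _ _ _ _ _ _ _ E01 P01 E11 P11 E20 P20); rewrite /asg /= ?Er.
have [S3 D3] : B00 (+) B11 (+) (if rhs i then B20 else B21) = false /\
   [&& val K00 != val K11, val K00 != val (if rhs i then K20 else K21)
     & val K11 != val (if rhs i then K20 else K21)].
  case Er: (rhs i).
    by apply: (Ksum (false,true) _ _ _ _ _ _ _ _ _ E00 P00 E11 P11 E20 P20); rewrite /asg /= ?Er.
  by apply: (Ksum (false,true) _ _ _ _ _ _ _ _ _ E00 P00 E11 P11 E21 P21); rewrite /asg /= ?Er.
have D4 : (val K00 != val K01) || (B00 != B01).
  rewrite -negb_and; apply/negP => /andP[/eqP/val_inj eK /eqP eB].
  have : pi (inl (vars i o0,false)) = pi (inl (vars i o0,true)) by rewrite E00 E01 eK eB.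
  by move/perm_inj.
rewrite /sat3 big3 !ffunE E00 E10 E20.
move: S1 S2 S3 D1 D2 D3 D4; case: (rhs i).
  move=> /= S1 S2 S3 /and3P[d1 d2 d3] /and3P[d4 d5 d6] /and3P[d7 d8 d9] D4; apply/eqP.
  exact: (core (rb:=true) S1 S2 S3 d1 d2 d3 d4 d5 d6 d7 (ltn_ord K00) (ltn_ord K01) (ltn_ord K10) (ltn_ord K11) (ltn_ord K20) (ltn_ord K21) D4).
move=> /= S1 S2 S3 /and3P[d1 d2 d3] /and3P[d4 d5 d6] /and3P[d7 d8 d9] D4; apply/eqP.
exact: (core (rb:=false) S1 S2 S3 d1 d2 d3 d4 d5 d6 d7 (ltn_ord K00) (ltn_ord K01) (ltn_ord K10) (ltn_ord K11) (ltn_ord K20) (ltn_ord K21) D4).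
Qed.
End L.

Lemma set2C (T : finType) (a b : T) : [set a; b] = [set b; a].
Proof. by apply/setP => z; rewrite !inE orbC. Qed.

Section E.
Variables (n m : nat) (vars : 'I_m -> 'I_3 -> 'I_n) (rhs : 'I_m -> bool).

Lemma card_gedges : #|gedges vars rhs| <= n + 18 * m.
Proof.
pose A := [set [set (inl (x,false) : gvert n m); inl (x,true)] | x : 'I_n].
pose B := [set [set (inr (t.1.1, t.1.2) : gvert n m);
                 inl (vars t.1.1 t.2, asg (rhs t.1.1) t.1.2 t.2)]
          | t : ('I_m * (bool * bool)) * 'I_3].
pose CC := [set t : 'I_m * {set bool * bool} | #|t.2| == 2].
pose C := [set [set (inr (t.1, p) : gvert n m) | p in (t.2 : {set bool * bool})] | t in CC].
have sub : gedges vars rhs \subset A :|: B :|: C.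
  apply/subsetP => e He; have := He; rewrite inE => /andP[/cards2P [u [v [neq ee]]] _].
  move: He; rewrite ee edgeE.
  case: u {neq ee} => [[x a]|[i p]]; case: v => [[y b]|[j q]] /=.
  - case/andP => /eqP <- ab; rewrite !inE; apply/orP; left; apply/orP; left.
    apply/imsetP; exists x => //; move: ab; case: a; case: b => //= _; exact: set2C.
  - case/existsP => k /andP[/eqP h1 /eqP h2]; rewrite !inE; apply/orP; left; apply/orP; right.
    apply/imsetP; exists ((j,q),k) => //=; by rewrite h1 h2 set2C.
  - case/existsP => k /andP[/eqP h1 /eqP h2]; rewrite !inE; apply/orP; left; apply/orP; right.
    apply/imsetP; exists ((i,p),k) => //=; by rewrite h1 h2.
  - case/andP => /eqP <- pq; rewrite !inE; apply/orP; right.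
    apply/imsetP; exists (i, [set p; q]); first by rewrite inE cards2 pq.
    by rewrite /= imsetU1 imset_set1.
have cA : #|A| <= n by rewrite (leq_trans (leq_imset_card _ _)) // card_ord.
have cB : #|B| <= 12 * m.
  by rewrite (leq_trans (leq_imset_card _ _)) // !card_prod !card_ord !card_bool -mulnA mulnC.
have cC : #|C| <= 6 * m.
  rewrite (leq_trans (leq_imset_card _ _)) //.
  have -> : CC = setX [set: 'I_m] [set S : {set bool * bool} | #|S| == 2].
    by apply/setP => -[a S]; rewrite !inE.
  by rewrite cardsX cardsT card_draws card_prod card_bool card_ord mulnC.
rewrite (leq_trans (subset_leq_card sub)) //.
rewrite (leq_trans (leq_card_setU _ _)) // (leq_trans (leq_add (leq_card_setU _ _) (leqnn _))) //.
rewrite -addnA; apply: leq_add => //.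
by apply: (leq_trans (leq_add cB cC)); rewrite -mulnDl.
Qed.
End E.

Lemma next_neq (T : eqType) (s : seq T) x : uniq s -> 1 < size s -> x \in s -> next s x != x.
Proof.
case: s => [//|y p] U Hs xin; rewrite next_nth xin.
have ilt : index x (y :: p) < size (y :: p) by rewrite index_mem.
have xE : nth y (y :: p) (index x (y :: p)) = x := nth_index y xin.
case: (ltnP (index x (y :: p)) (size p)) => h.
  rewrite -[X in _ != X]xE; change (nth y (y :: p) (index x (y :: p)).+1 != nth y (y :: p) (index x (y :: p))).
  rewrite nth_uniq //=; lia.
rewrite nth_default // -[X in _ != X]xE.
change (nth y (y :: p) 0 != nth y (y :: p) (index x (y :: p))).
rewrite nth_uniq //=; move: Hs ilt h => /=; lia.
Qed.

Lemma iso_perm n (I : {set 'I_n}) : 1 < #|I| -> exists pi : {perm 'I_n},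
  (forall x, x \notin I -> pi x = x) /\ (forall x, x \in I -> pi x != x).
Proof.
move=> HI; have U := enum_uniq (mem I).
exists (perm (can_inj (prev_next U))); split => x Hx; rewrite permE.
  by rewrite next_nth mem_enum (negbTE Hx).
by apply: next_neq; rewrite // -?cardE // mem_enum.
Qed.

Definition isinr n m (v : gvert n m) := if v is inr _ then true else false.
Definition cidx n m (e : {set gvert n m}) : option 'I_m :=
  if [pick v in e | isinr v] is Some (inr (i,_)) then Some i else None.

Lemma cidxE n m (i : 'I_m) p (w : gvert n m) :
  (forall j r, w = inr (j,r) -> j = i) -> cidx [set inr (i,p); w] = Some i.
Proof.
move=> Hw; rewrite /cidx; case: pickP => [v /andP[vin vr] | H].
  move: vin; rewrite !inE => /orP[/eqP->|/eqP vw] //.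
  by case: v vr vw => // -[j r] _ vw; rewrite (Hw j r (esym vw)).
by have := H (inr (i,p)); rewrite !inE eqxx.
Qed.

Section C.
Variables (n m : nat) (vars : 'I_m -> 'I_3 -> 'I_n) (rhs : 'I_m -> bool).
Hypothesis vinj : forall j, injective (vars j).
Variable pi : {perm gvert n m}.
Local Notation adj0 := (gadj vars (fun _ => false)).

Lemma count_main :
  #|[set i : 'I_m | ~~ sat3 (vars i) (rhs i) (shift pi)]| <=
  #|[set e in gedges vars rhs | pi @: e \notin gedges vars (fun _ => false)]|.
Proof.
have sub : [set Some i | i in [set i : 'I_m | ~~ sat3 (vars i) (rhs i) (shift pi)]] \subset
  [set cidx e | e in [set e in gedges vars rhs | pi @: e \notin gedges vars (fun _ => false)]].
  apply/subsetP => o /imsetP [i]; rewrite inE => nsat ->.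
  have [Hc|] := boolP [forall p, forall q, (p != q) ==> adj0 (pi (inr (i,p))) (pi (inr (i,q)))].
    have [Hl|] := boolP [forall p, forall k, adj0 (pi (inr (i,p))) (pi (inl (vars i k, asg (rhs i) p k)))].
      have := local vinj (pi := pi) (i := i).
      move=> L; exfalso; move/negP: nsat; apply; apply: L.
        by move=> p q pq; move/forallP/(_ p)/forallP/(_ q)/implyP/(_ pq): Hc.
      by move=> p k; move/forallP/(_ p)/forallP/(_ k): Hl.
    rewrite negb_forall => /existsP [p]; rewrite negb_forall => /existsP [k] nadj.
    apply/imsetP; exists [set inr (i,p); inl (vars i k, asg (rhs i) p k)].
      rewrite inE edgeE /= imset2E edgeE nadj andbT; apply/existsP; exists k.
      by rewrite !eqxx.
    by rewrite cidxE.
  rewrite negb_forall => /existsP [p]; rewrite negb_forall => /existsP [q].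
  rewrite negb_imply => /andP[pq nadj].
  apply/imsetP; exists [set inr (i,p); inr (i,q)].
    by rewrite inE edgeE /= imset2E edgeE nadj eqxx pq.
  by rewrite cidxE // => j r [->].
rewrite -(card_imset _ (@Some_inj _)).
exact: (leq_trans (subset_leq_card sub) (leq_imset_card _ _)).
Qed.
End C.


Unset Implicit Arguments. Set Strict Implicit. Set Printing Implicit Defensive.
Local Open Scope ring_scope.

Theorem lemma5p2 (R : realFieldType) (n m : nat) (c eps beta gamma : R)
    (he : 'I_m -> {set 'I_n})
    (vars : 'I_m -> 'I_3 -> 'I_n) (rhs : 'I_m -> bool) :
  (forall i, #|he i| = 3%N) ->
  injective he ->
  0 < c -> m%:R = c * n%:R ->
  0 < eps <= 1 -> 0 <= beta <= 1 ->
  degree_bounded he eps (100 * c) ->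
  asymmetric he beta gamma ->
  200 * eps <= gamma ->
  (forall i, [set vars i k | k : 'I_3] = he i) ->
  let delta := Num.min (200%:R)^-1 (Num.min (gamma / 48%:R) (eps / (95%:R * c))) in
  GI R (gedges vars rhs) (gedges vars (fun _ => false)) >= 1 - delta ->
  val3 R vars rhs >= 9%:R / 10%:R - 100%:R * (eps + beta).
Proof.
move=> Hcard Hinj c0 hm /andP[e0 e1] /andP[b0 b1] Hdeg Hasym Hgam Hvars delta HGI.
have vinj : forall j, injective (vars j).
  move=> j x y e; have := Hcard j; rewrite -Hvars => h.
  have /imset_injP H : #|[set vars j k | k : 'I_3]| == #|'I_3| by rewrite h card_ord.
  exact: H.
have := (lexx delta : delta <= Num.min (200%:R)^-1 (Num.min (gamma / 48%:R) (eps / (95%:R * c)))).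
rewrite !le_min => /andP[d1 /andP[d2 d3]].
have val0 : 0 <= val3 R vars rhs by rewrite /val3 divr_ge0.
case: (lerP (9%:R / 1000%:R) beta) => hb.
  apply: le_trans val0; lra.
have h0 : (0 < #|{perm gvert n m}|)%N by apply/card_gt0P; exists 1%g.
have [pi Hpi] := @bigop.eq_bigmax _ (fun pi : {perm gvert n m} =>
   #|[set e in gedges vars rhs | (pi @: e) \in gedges vars (fun _ => false)]|) h0.
rewrite /GI Hpi in HGI.
set good := #|[set e in gedges vars rhs | _ \in _]| in HGI.
set M := maxn _ _ in HGI.
have hM : (M <= n + 18 * m)%N by rewrite geq_max !card_gedges.
have hEG : (#|gedges vars rhs| <= M)%N by rewrite leq_maxl.
have hbad : (good + #|[set e in gedges vars rhs | pi @: e \notin gedges vars (fun _ => false)]| = #|gedges vars rhs|)%N.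
  rewrite -(cardsID [set e : {set gvert n m} | pi @: e \in gedges vars (fun _ => false)] (gedges vars rhs)).
  rewrite /good; congr (_ + _)%N; apply: eq_card => e; rewrite !inE //.
  by rewrite andbC.
have hsat : (#|[set i : 'I_m | sat3 (vars i) (rhs i) (shift pi)]| +
            #|[set i : 'I_m | ~~ sat3 (vars i) (rhs i) (shift pi)]| = m)%N.
  rewrite -[X in (_ = X)%N](card_ord m) -(cardsC [set i : 'I_m | sat3 (vars i) (rhs i) (shift pi)]).
  by congr (_ + _)%N; apply: eq_card => i; rewrite !inE.
have hcnt := count_main rhs vinj pi.
set S := #|[set i : 'I_m | sat3 _ _ _]| in hsat.
set U := #|[set i : 'I_m | ~~ sat3 _ _ _]| in hsat hcnt.
set Bd := #|[set e in gedges vars rhs | _ \notin _]| in hbad hcnt.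
have dpos : 0 <= delta.
  rewrite /delta !le_min; apply/andP; split; first by rewrite invr_ge0.
  by apply/andP; split; apply: divr_ge0; lra.
have Mpos : (0 < M)%N.
  rewrite lt0n; apply/negP => /eqP M0.
  have M0' : M%:R = 0 :> R by rewrite M0.
  by move: HGI; rewrite M0' invr0 mulr0; lra.
have npos : (0 < n)%N.
  case: (posnP n) => [n0|//]; move: hm; rewrite n0 mulr0 => /eqP; rewrite pnatr_eq0 => /eqP m0.
  have : (n + 18 * m <= 0)%N by rewrite n0 m0.
  move/(leq_trans hM); rewrite leqn0 => /eqP M0.
  by rewrite M0 in Mpos.
have mpos : (0 < m)%N.
  by rewrite -(ltr0n R) hm; apply: mulr_gt0 => //; rewrite ltr0n.
have hSR : S%:R + U%:R = m%:R :> R by rewrite -natrD hsat.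
have hUB : U%:R <= Bd%:R :> R by rewrite ler_nat.
have hBd : Bd%:R + good%:R = #|gedges vars rhs|%:R :> R by rewrite -natrD addnC hbad.
have hEGR : #|gedges vars rhs|%:R <= M%:R :> R by rewrite ler_nat.
have hMR : M%:R <= n%:R + 18 * m%:R :> R.
  by have := hM; rewrite -(ler_nat R) natrD natrM.
have hgood : (1 - delta) * M%:R <= good%:R by rewrite -ler_pdivlMr // ltr0n.
have hval : S%:R / m%:R <= val3 R vars rhs.
  rewrite /val3; apply: ler_wpM2r; first by rewrite invr_ge0.
  rewrite ler_nat.
  exact: (leq_bigmax (F := fun x => #|[set i : 'I_m | sat3 (vars i) (rhs i) x]|) (shift pi)).
have n0R : 0 < n%:R :> R by rewrite ltr0n.
have m0R : 1 <= m%:R :> R by rewrite ler1n.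
case: (ltrP c (10%:R)^-1) => hc.
  pose Cov := [set vars t.1 t.2 | t : 'I_m * 'I_3].
  have hcov : (#|Cov| <= 3 * m)%N.
    by rewrite (leq_trans (leq_imset_card _ _)) // card_prod !card_ord mulnC.
  have hI : (#|~: Cov| + #|Cov| = n)%N by rewrite addnC cardsC card_ord.
  have mn : 10%:R * m%:R < n%:R :> R.
    rewrite hm.
    have h : c * n%:R < 10%:R^-1 * n%:R by rewrite ltr_pM2r.
    have e : 10%:R * (10%:R^-1 * n%:R) = n%:R :> R by rewrite mulrA mulfV ?mul1r // pnatr_eq0.
    by rewrite -[X in _ < X]e ltr_pM2l.
  have hcovR : #|Cov|%:R <= 3 * m%:R :> R by have := hcov; rewrite -(ler_nat R) natrM.
  have hIR : #|~: Cov|%:R + #|Cov|%:R = n%:R :> R by rewrite -natrD hI.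
  have I1 : (1 < #|~: Cov|)%N by rewrite -(ltr_nat R); lra.
  have [sg [fix1 fix2]] := iso_perm I1.
  have hfix : [set x | sg x == x] = Cov.
    apply/setP => x; rewrite inE; case: (boolP (x \in Cov)) => h.
      by rewrite fix1 ?eqxx // inE h.
    by apply/negbTE; apply: fix2; rewrite inE.
  have hprem : #|[set x | sg x == x]|%:R <= (1 - beta) * n%:R.
    rewrite hfix.
    have : beta * n%:R <= 9%:R / 1000%:R * n%:R by apply: ler_wpM2r => //; apply: ltW.
    lra.
  have hAUT : AUT R (hedges he) sg = 1.
    rewrite /AUT.
    have -> : [set e in hedges he | sg @: e \in hedges he] = hedges he.
      apply/setP => e; rewrite inE; case: (boolP (e \in hedges he)) => //= eE.
      suff -> : sg @: e = e by [].
      case/imsetP: eE => i _ ->.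
      rewrite -Hvars -[RHS]imset_id; apply: eq_in_imset => x /imsetP [k _ ->].
      by apply: fix1; rewrite inE negbK; apply/imsetP; exists (i,k).
    apply: divff; rewrite pnatr_eq0 -lt0n; apply/card_gt0P; exists (he (Ordinal mpos)).
    by apply/imsetP; exists (Ordinal mpos).
  have := Hasym sg hprem; rewrite hAUT; lra.
apply: le_trans hval; rewrite ler_pdivlMr ?ltr0n //.
have e3 : delta * (95 * c) <= eps by rewrite -ler_pdivlMr // mulr_gt0.
have hc' : 1 <= 10%:R * c.
  apply: le_trans (_ : 10%:R * 10%:R^-1 <= _); first by rewrite mulfV // pnatr_eq0.
  by apply: ler_wpM2l.
have hc2 : 1 <= 100 * (c * c) by nra.
have key : delta * n%:R <= 100 * eps * m%:R.
  rewrite hm.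
  have cn0 : 0 <= c * n%:R by apply: mulr_ge0; lra.
  have t1 : 100 * (delta * (95 * c)) * (c * n%:R) <= 100 * eps * (c * n%:R).
    by apply: ler_wpM2r => //; apply: ler_wpM2l.
  have t2 : 95 * (delta * n%:R) <= 95 * (delta * n%:R) * (100 * (c * c)).
    by apply: ler_peMr => //; apply: mulr_ge0 => //; apply: mulr_ge0.
  have t3 : 100 * (delta * (95 * c)) * (c * n%:R) = 95 * (delta * n%:R) * (100 * (c * c)) by ring.
  have dn0 : 0 <= delta * n%:R by apply: mulr_ge0.
  rewrite t3 in t1; have := le_trans t2 t1; lra.
have hdM : delta * M%:R <= delta * (n%:R + 18 * m%:R) := ler_wpM2l dpos hMR.
have hdm : delta * m%:R <= 200^-1 * m%:R by apply: ler_wpM2r.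
have hbm : 0 <= beta * m%:R by apply: mulr_ge0.
lra.
Qed.
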